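(* Let $K\ge1$ and let $f(z)=\sum_{n=0}^\infty a_nz^n+\sum_{n=1}^\infty\overline{b_n}\,\overline{z}^n$ be a $K$-quasiconformal harmonic mapping on $\mathbb{D}$. If there is a constant $M>0$ such that $\ell_f^{\ast}(\theta,1)\le M$ for all $\theta\in[0,2\pi]$, then $|a_n|+|b_n|\le KM$ for all $n\ge1$. In particular, if $K=1$ the estimate is sharp, with extremal function $f(z)=Mz$.
   Context: $\mathbb{D}$ is the open unit disk. A sense-preserving homeomorphism $f\in W^{1,2}_{loc}$ is $K$-quasiconformal if $(|f_z|+|f_{\bar z}|)^2\le K(|f_z|^2-|f_{\bar z}|^2)$. For a harmonic mapping $f$ in $\mathbb{D}$, $\theta\in[0,2\pi]$ and $r\in[0,1)$, $\ell_f^{\ast}(\theta,r)=\int_0^r\left|f_z(\rho e^{i\theta})+e^{-2i\theta}f_{\bar z}(\rho e^{i\theta})\right|d\rho$, and $\ell_f^{\ast}(\theta,1)=\sup_{0<r<1}\ell_f^{\ast}(\theta,r)$. *)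

(* Defs.v *)
From Stdlib Require Import Reals.
From Coquelicot Require Import Coquelicot.
Open Scope R_scope.

Definition unit_disk (z : C) : Prop := Cmod z < 1.

Definition dx (f : C -> C) (z : C) : C :=
  (Derive (fun t => fst (f (Cplus z (t, 0)))) 0,
   Derive (fun t => snd (f (Cplus z (t, 0)))) 0).
Definition dy (f : C -> C) (z : C) : C :=
  (Derive (fun t => fst (f (Cplus z (0, t)))) 0,
   Derive (fun t => snd (f (Cplus z (0, t)))) 0).

Definition dz (f : C -> C) (z : C) : C :=
  Cmult (/2, 0) (Cminus (dx f z) (Cmult (0, 1) (dy f z))).
Definition dzb (f : C -> C) (z : C) : C :=
  Cmult (/2, 0) (Cplus (dx f z) (Cmult (0, 1) (dy f z))).

Definition homeo_on_disk (f : C -> C) : Prop :=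
  (forall z, unit_disk z -> continuous f z) /\
  (forall z w, unit_disk z -> unit_disk w -> f z = f w -> z = w) /\
  (forall U : C -> Prop, open U -> (forall z, U z -> unit_disk z) ->
     open (fun w => exists z, U z /\ f z = w)).

(* sense-preserving: positive Jacobian J_f = |f_z|^2 - |f_zbar|^2 *)
Definition sense_preserving (f : C -> C) : Prop :=
  forall z, unit_disk z -> Cmod (dzb f z) ^ 2 < Cmod (dz f z) ^ 2.

(* K-quasiconformal (for smooth f the W^{1,2}_loc condition is automatic
   and the a.e. inequality is equivalent to the pointwise one) *)
Definition K_quasiconformal (K : R) (f : C -> C) : Prop :=
  homeo_on_disk f /\ sense_preserving f /\
  forall z, unit_disk z ->
    (Cmod (dz f z) + Cmod (dzb f z)) ^ 2 <=
      K * (Cmod (dz f z) ^ 2 - Cmod (dzb f z) ^ 2).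

Definition eitheta (t : R) : C := (cos t, sin t).

Definition ell_star (f : C -> C) (theta r : R) : R :=
  RInt (fun rho =>
          Cmod (Cplus (dz f (Cmult (RtoC rho) (eitheta theta)))
                      (Cmult (eitheta (-2 * theta))
                             (dzb f (Cmult (RtoC rho) (eitheta theta))))))
       0 r.

Definition ell_star1 (f : C -> C) (theta : R) : Rbar :=
  Lub_Rbar (fun x => exists r, 0 < r < 1 /\ x = ell_star f theta r).

(* Main.v *)
Require Import Defs.
From Stdlib Require Import Reals Lra Psatz.
From Coquelicot Require Import Coquelicot.
Open Scope R_scope.

Lemma C_eq (x y : C) : fst x = fst y -> snd x = snd y -> x = y.
Proof. destruct x, y; simpl; intros; subst; auto. Qed.

Lemma E_mod t : Cmod (eitheta t) = 1.
Proof.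
  unfold Cmod, eitheta; cbn [fst snd].
  replace (cos t ^ 2 + sin t ^ 2) with 1.
  apply sqrt_1. rewrite <- (sin2_cos2 t); unfold Rsqr; ring.
Qed.

Lemma E_add s t : eitheta (s + t) = Cmult (eitheta s) (eitheta t).
Proof. apply C_eq; unfold eitheta; simpl; [rewrite cos_plus | rewrite sin_plus]; ring. Qed.

Lemma E_0 : eitheta 0 = RtoC 1.
Proof. apply C_eq; unfold eitheta; simpl; [apply cos_0 | apply sin_0]. Qed.

Lemma E_pow t k : Cpow (eitheta t) k = eitheta (INR k * t).
Proof.
  induction k.
  - simpl. rewrite Rmult_0_l, E_0. reflexivity.
  - rewrite Cpow_S, IHk, <- E_add. f_equal. rewrite S_INR. ring.
Qed.

Lemma Re_le (c : C) : Re c <= Cmod c.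
Proof. generalize (re_le_Cmod c). intros H. apply Rabs_le_between in H. lra. Qed.

Lemma Re_mul_le (v x : C) : Re (v * x) <= Cmod v * Cmod x.
Proof. rewrite <- Cmod_mult. apply Re_le. Qed.

Lemma unit_for (w : C) : exists v, Cmod v <= 1 /\ Re (v * w) = Cmod w.
Proof.
  destruct (Ceq_dec w 0) as [->|Hw].
  - exists (RtoC 0). rewrite Cmod_0, Cmult_0_l. simpl. lra.
  - assert (Hm : 0 < Cmod w) by (apply Cmod_gt_0; auto).
    exists (RtoC (/ Cmod w) * Cconj w)%C. split.
    + rewrite Cmod_mult, Cmod_conj, Cmod_R, Rabs_pos_eq.
      rewrite Rinv_l; lra. left; apply Rinv_0_lt_compat; auto.
    + rewrite <- Cmult_assoc, (Cmult_comm (Cconj w)), <- Cmod2_conj.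
      rewrite <- RtoC_mult, re_RtoC. field. lra.
Qed.

Lemma Cmod_le_ReIm (c : C) : Cmod c <= Rabs (Re c) + Rabs (Im c).
Proof.
  unfold Cmod. destruct c as [x y]; simpl.
  rewrite <- (sqrt_Rsqr (Rabs x + Rabs y)).
  2: { generalize (Rabs_pos x) (Rabs_pos y); lra. }
  apply sqrt_le_1_alt. unfold Rsqr.
  generalize (Rabs_pos x) (Rabs_pos y). intros.
  generalize (pow2_abs x) (pow2_abs y). intros. nra.
Qed.

Lemma sum_n_Re (u : nat -> C) N : sum_n (fun k => Re (u k)) N = Re (sum_n u N).
Proof.
  induction N.
  - rewrite !sum_O. reflexivity.
  - rewrite !sum_Sn, IHN. reflexivity.
Qed.

Lemma sum_n_Im (u : nat -> C) N : sum_n (fun k => Im (u k)) N = Im (sum_n u N).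
Proof.
  induction N.
  - rewrite !sum_O. reflexivity.
  - rewrite !sum_Sn, IHN. reflexivity.
Qed.

Lemma is_series_Re (u : nat -> C) l :
  @is_series C_AbsRing C_NormedModule u l -> is_series (fun k => Re (u k)) (Re l).
Proof.
  unfold is_series. intros H.
  eapply filterlim_ext. intro N; symmetry; apply sum_n_Re.
  eapply filterlim_comp. exact H.
  destruct l as [x y]. apply (continuous_fst x y).
Qed.

Lemma is_series_Im (u : nat -> C) l :
  @is_series C_AbsRing C_NormedModule u l -> is_series (fun k => Im (u k)) (Im l).
Proof.
  unfold is_series. intros H.
  eapply filterlim_ext. intro N; symmetry; apply sum_n_Im.
  eapply filterlim_comp. exact H.
  destruct l as [x y]. apply (continuous_snd x y).
Qed.

Lemma is_series_ReL (u : nat -> C) l v :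
  @is_series C_AbsRing C_NormedModule u l ->
  is_series (fun k => Re (v * u k)) (Re (v * l)).
Proof.
  intros H. apply is_series_Re. apply (@is_series_scal C_AbsRing C_NormedModule v u l H).
Qed.

Lemma Series_zero : Series (fun _ => 0) = 0.
Proof.
  rewrite (Series_ext _ (fun n => 0 * 0)) by (intros; ring).
  rewrite Series_scal_l. ring.
Qed.

Lemma Series_le_gen (x y : nat -> R) :
  ex_series x -> ex_series y -> (forall k, x k <= y k) -> Series x <= Series y.
Proof.
  intros Hx Hy H.
  assert (0 <= Series (fun k => y k - x k)).
  { rewrite <- Series_zero.
    apply Series_le. intros; specialize (H n); lra.
    apply (ex_series_minus y x); auto. }
  rewrite Series_minus in H0; auto. lra.
Qed.

Lemma CS_bound (u : nat -> C) l (b : nat -> R) :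
  @is_series C_AbsRing C_NormedModule u l -> ex_series b ->
  (forall k, Cmod (u k) <= b k) -> Cmod l <= Series b.
Proof.
  intros Hu Hb Hle.
  destruct (unit_for l) as [v [Hv Hre]]. rewrite <- Hre.
  assert (H1 := is_series_ReL u l v Hu).
  rewrite <- (is_series_unique _ _ H1).
  apply Series_le_gen; auto. eexists; eauto.
  intros k. eapply Rle_trans. apply Re_mul_le.
  specialize (Hle k). generalize (Cmod_ge_0 (u k)). nra.
Qed.

Lemma lim_inv_S : is_lim_seq (fun n => / INR (S n)) 0.
Proof.
  assert (H := is_lim_seq_inv _ _ is_lim_seq_INR).
  simpl in H. specialize (H ltac:(discriminate)).
  apply (is_lim_seq_incr_1 (fun n => / INR n) 0). exact H.
Qed.

Lemma geom_k2 q : 0 < q < 1 -> ex_series (fun k => INR (S k) ^ 2 * q ^ k).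
Proof.
  intros Hq.
  apply ex_series_Rabs.
  apply (ex_series_DAlembert _ q). lra.
  - intros n. apply Rmult_integral_contrapositive_currified.
    apply pow_nonzero. apply not_0_INR. discriminate.
    apply pow_nonzero. lra.
  - apply is_lim_seq_ext with (fun n => (1 + / INR (S n)) * (1 + / INR (S n)) * q).
    + intros n. assert (0 < INR (S n)) by (apply lt_0_INR; lia).
      rewrite Rabs_pos_eq.
      2: { apply Rmult_le_pos.  apply Rmult_le_pos. apply pow_le. apply pos_INR. apply pow_le; lra.
           apply Rlt_le, Rinv_0_lt_compat. apply Rmult_lt_0_compat. apply pow_lt; auto. apply pow_lt; lra. }
      rewrite (S_INR (S n)). set (m := INR (S n)) in *.
      replace (q ^ S n) with (q * q ^ n) by reflexivity.
      assert (q ^ n <> 0) by (apply pow_nonzero; lra).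
      field. split; auto. lra.
    + assert (Hl : is_lim_seq (fun n => 1 + / INR (S n)) (1 + 0)).
      { apply is_lim_seq_plus'. apply is_lim_seq_const. apply lim_inv_S. }
      assert (H2 : is_lim_seq (fun n => (1 + / INR (S n)) * (1 + / INR (S n)) * q) ((1+0)*(1+0)*q)).
      { apply is_lim_seq_mult'. apply is_lim_seq_mult'; auto. apply is_lim_seq_const. }
      replace ((1+0)*(1+0)*q) with q in H2 by ring. exact H2.
Qed.

Lemma Cmod_RtoC_pow_mult (t : R) (x : C) k : 0 <= t ->
  Cmod (Cpow (RtoC t) k * x) = t ^ k * Cmod x.
Proof.
  intros Ht. rewrite Cmod_mult, Cmod_pow, Cmod_R, Rabs_pos_eq; auto.
Qed.

Lemma coef_summable (a : nat -> C) (h : C -> C) :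
  (forall z, unit_disk z -> is_pseries a z (h z)) ->
  forall s, 0 <= s < 1 -> ex_series (fun k => INR (S k) ^ 2 * Cmod (a k) * s ^ k).
Proof.
  intros H s Hs.
  set (t := (1 + s) / 2).
  assert (Ht : 0 < t < 1 /\ s < t) by (unfold t; lra).
  assert (Hp := H (RtoC t) ltac:(unfold unit_disk; rewrite Cmod_R, Rabs_pos_eq; lra)).
  change (@is_series C_AbsRing C_NormedModule (fun k => (Cpow (RtoC t) k * a k)%C) (h t)) in Hp.
  set (u := fun k => (Cpow (RtoC t) k * a k)%C) in Hp.
  assert (H1 := ex_series_lim_0 _ (ex_intro _ _ (is_series_Re u _ Hp))).
  assert (H2 := ex_series_lim_0 _ (ex_intro _ _ (is_series_Im u _ Hp))).
  apply is_lim_seq_spec in H1. apply is_lim_seq_spec in H2.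
  destruct (H1 (mkposreal (1/2) ltac:(lra))) as [N1 HN1].
  destruct (H2 (mkposreal (1/2) ltac:(lra))) as [N2 HN2].
  assert (Hu : forall k, (Nat.max N1 N2 <= k)%nat -> t ^ k * Cmod (a k) <= 1).
  { intros k Hk. rewrite <- Cmod_RtoC_pow_mult by lra.
    eapply Rle_trans. apply (Cmod_le_ReIm (u k)).
    specialize (HN1 k ltac:(lia)). specialize (HN2 k ltac:(lia)). cbn [pos] in HN1, HN2.
    rewrite Rminus_0_r in HN1, HN2. lra. }
  set (N := Nat.max N1 N2) in *.
  set (q := (1 + s / t) / 2).
  assert (Hq : 0 < q < 1 /\ s <= q * t).
  { unfold q. split. split.
    - assert (0 <= s / t) by (apply Rdiv_le_0_compat; lra). lra.
    - assert (s / t < 1).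
      { apply (Rmult_lt_reg_r t). lra. unfold Rdiv. rewrite Rmult_assoc, Rinv_l; lra. }
      lra.
    - replace ((1 + s / t) / 2 * t) with ((t + s) / 2) by (field; lra). lra. }
  apply (ex_series_incr_n _ N).
  apply (@ex_series_le R_AbsRing R_CompleteNormedModule) with (b := fun k => INR (S (N + k)) ^ 2 * q ^ (N + k)).
  - intros k. change (norm ?x) with (Rabs x).
    rewrite Rabs_pos_eq.
    2: { apply Rmult_le_pos. apply Rmult_le_pos. apply pow_le, pos_INR. apply Cmod_ge_0. apply pow_le; lra. }
    rewrite Rmult_assoc. apply Rmult_le_compat_l. apply pow_le, pos_INR.
    specialize (Hu (N + k)%nat ltac:(lia)).
    assert (s ^ (N + k) <= q ^ (N + k) * t ^ (N + k)).
    { rewrite <- Rpow_mult_distr. apply pow_incr. lra. }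
    assert (0 <= q ^ (N+k)) by (apply pow_le; lra).
    generalize (Cmod_ge_0 (a (N+k)%nat)). nra.
  - apply (ex_series_incr_n (fun k => INR (S k) ^ 2 * q ^ k) N). apply geom_k2. lra.
Qed.

Definition dterm (a : nat -> C) (z : C) (k : nat) : C :=
  (RtoC (INR k) * a k * Cpow z (pred k))%C.
Definition Dser (a : nat -> C) (z : C) : C :=
  (Series (fun k => Re (dterm a z k)), Series (fun k => Im (dterm a z k))).
Definition W (a : nat -> C) (s : R) : R :=
  Series (fun k => INR (S k) ^ 2 * Cmod (a k) * s ^ k).

Lemma pow_diff_bound (z u : C) s m : 0 < s -> Cmod z <= s -> Cmod (z + u) <= s ->
  s * Cmod (Cpow (z + u) m - Cpow z m) <= INR m * Cmod u * s ^ m.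
Proof.
  intros Hs Hz Hw. induction m.
  - replace (Cpow (z + u) 0 - Cpow z 0)%C with (RtoC 0) by (apply C_eq; simpl; ring).
    rewrite Cmod_0. simpl. lra.
  - replace (Cpow (z + u) (S m) - Cpow z (S m))%C with
      ((z + u) * (Cpow (z + u) m - Cpow z m) + u * Cpow z m)%C
      by (rewrite !Cpow_S; ring).
    eapply Rle_trans. apply Rmult_le_compat_l. lra. apply Cmod_triangle.
    rewrite !Cmod_mult, Cmod_pow.
    assert (Hzm : Cmod z ^ m <= s ^ m) by (apply pow_incr; split; auto; apply Cmod_ge_0).
    assert (H0 := Cmod_ge_0 (Cpow (z + u) m - Cpow z m)).
    assert (H1 := Cmod_ge_0 u). assert (H2 := Cmod_ge_0 (z+u)).
    assert (H3 : 0 <= s ^ m) by (apply pow_le; lra).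
    rewrite S_INR. simpl.
    set (A := Cmod (Cpow (z + u) m - Cpow z m)) in *. set (B := Cmod (z+u)) in *.
    assert (e1 : B * (s * A) <= B * (INR m * Cmod u * s ^ m)) by (apply Rmult_le_compat_l; auto).
    assert (e2 : B * (INR m * Cmod u * s ^ m) <= s * (INR m * Cmod u * s ^ m)).
    { apply Rmult_le_compat_r; auto. apply Rmult_le_pos; auto. apply Rmult_le_pos; auto. apply pos_INR. }
    assert (e3 : s * Cmod u * Cmod z ^ m <= s * Cmod u * s ^ m).
    { apply Rmult_le_compat_l; auto. apply Rmult_le_pos; lra. }
    nra.
Qed.

Definition Pk (z u : C) (k : nat) : C :=
  (Cpow (z + u) k - Cpow z k - u * RtoC (INR k) * Cpow z (pred k))%C.

Lemma Pk_rec z u k : Pk z u (S k) = ((z + u) * Pk z u k + RtoC (INR k) * u * u * Cpow z (pred k))%C.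
Proof.
  unfold Pk. destruct k.
  - simpl. apply C_eq; simpl; ring.
  - cbn [pred].
    replace (RtoC (INR (S (S k)))) with (RtoC (INR (S k)) + 1)%C
      by (rewrite (S_INR (S k)); apply C_eq; simpl; ring).
    rewrite !Cpow_S. ring.
Qed.

Lemma Pk_bound (z u : C) s k : 0 < s -> Cmod z <= s -> Cmod (z + u) <= s ->
  s ^ 2 * Cmod (Pk z u k) <= INR k ^ 2 * Cmod u ^ 2 * s ^ k.
Proof.
  intros Hs Hz Hw. induction k.
  - replace (Pk z u 0) with (RtoC 0) by (unfold Pk; apply C_eq; simpl; ring).
    rewrite Cmod_0. simpl. lra.
  - rewrite Pk_rec.
    assert (T := Cmod_triangle ((z + u) * Pk z u k) (RtoC (INR k) * u * u * Cpow z (pred k))).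
    rewrite !Cmod_mult, Cmod_pow, Cmod_R, Rabs_pos_eq in T by apply pos_INR.
    set (A := Cmod (Pk z u k)) in *. set (B := Cmod (z+u)) in *.
    assert (HA : 0 <= A) by apply Cmod_ge_0. assert (HB : 0 <= B) by apply Cmod_ge_0.
    assert (Hu : 0 <= Cmod u) by apply Cmod_ge_0.
    assert (Hsk : 0 <= s ^ k) by (apply pow_le; lra).
    assert (e1 : B * (s^2 * A) <= B * (INR k ^ 2 * Cmod u ^ 2 * s ^ k)) by (apply Rmult_le_compat_l; auto).
    assert (e2 : B * (INR k ^ 2 * Cmod u ^ 2 * s ^ k) <= s * (INR k ^ 2 * Cmod u ^ 2 * s ^ k)).
    { apply Rmult_le_compat_r; auto. apply Rmult_le_pos; auto. apply Rmult_le_pos; auto. apply pow_le, pos_INR. apply pow_le; auto. }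
    assert (e3 : s ^ 2 * (INR k * Cmod u * Cmod u * Cmod z ^ pred k) <= INR k * Cmod u ^ 2 * s ^ S k).
    { destruct k.
      - simpl. lra.
      - cbn [pred]. assert (Cmod z ^ k <= s ^ k) by (apply pow_incr; split; auto; apply Cmod_ge_0).
        assert (0 <= INR (S k)) by apply pos_INR.
        assert (0 <= INR (S k) * Cmod u ^ 2 * s ^ 2) by (apply Rmult_le_pos; [apply Rmult_le_pos|]; [auto | apply pow_le; auto | apply pow_le; lra]).
        replace (s ^ S (S k)) with (s ^ 2 * s ^ k) by (simpl; ring).
        replace (s ^ 2 * (INR (S k) * Cmod u * Cmod u * Cmod z ^ k)) with (INR (S k) * Cmod u ^ 2 * s ^ 2 * Cmod z ^ k) by ring.
        replace (INR (S k) * Cmod u ^ 2 * (s ^ 2 * s ^ k)) with (INR (S k) * Cmod u ^ 2 * s ^ 2 * s ^ k) by ring.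
        apply Rmult_le_compat_l; auto. }
    assert (e4 : 0 <= INR k) by apply pos_INR.
    assert (e5 : INR k ^ 2 + INR k <= INR (S k) ^ 2) by (rewrite S_INR; nra).
    assert (e6 : 0 <= Cmod u ^ 2 * s ^ S k) by (apply Rmult_le_pos; apply pow_le; lra).
    replace (s ^ S k) with (s * s ^ k) in * by reflexivity.
    nra.
Qed.

Definition PS (a : nat -> C) (h : C -> C) := forall z, unit_disk z -> is_pseries a z (h z).

Lemma dterm_bound a z s k : 0 < s -> Cmod z <= s ->
  Cmod (dterm a z k) <= / s * (INR (S k) ^ 2 * Cmod (a k) * s ^ k).
Proof.
  intros Hs Hz. unfold dterm.
  rewrite !Cmod_mult, Cmod_pow, Cmod_R, Rabs_pos_eq by apply pos_INR.
  assert (Ha := Cmod_ge_0 (a k)).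
  destruct k.
  - simpl. assert (0 <= / s) by (left; apply Rinv_0_lt_compat; lra). nra.
  - cbn [pred]. 
    assert (Cmod z ^ k <= s ^ k) by (apply pow_incr; split; auto; apply Cmod_ge_0).
    replace (/ s * (INR (S (S k)) ^ 2 * Cmod (a (S k)) * s ^ S k)) with
      (INR (S (S k)) ^ 2 * Cmod (a (S k)) * s ^ k) by (simpl; field; lra).
    assert (INR (S k) <= INR (S (S k)) ^ 2) by (rewrite (S_INR (S k)); generalize (pos_INR (S k)); nra).
    assert (0 <= INR (S k)) by apply pos_INR.
    assert (0 <= Cmod z ^ k) by (apply pow_le, Cmod_ge_0).
    assert (INR (S k) * Cmod (a (S k)) * Cmod z ^ k <= INR (S k) * Cmod (a (S k)) * s ^ k)
      by (apply Rmult_le_compat_l; auto; apply Rmult_le_pos; auto).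
    assert (0 <= Cmod (a (S k)) * s ^ k) by (apply Rmult_le_pos; auto; apply pow_le; lra).
    nra.
Qed.

Lemma Dser_correct a h : PS a h -> forall z, Cmod z < 1 ->
  @is_series C_AbsRing C_NormedModule (dterm a z) (Dser a z).
Proof.
  intros H z Hz.
  set (s := (1 + Cmod z) / 2).
  assert (Hs : 0 < s < 1 /\ Cmod z <= s) by (generalize (Cmod_ge_0 z); unfold s; lra).
  assert (Hex : ex_series (dterm a z)).
  { apply (@ex_series_le C_AbsRing C_CompleteNormedModule) with
      (b := fun k => / s * (INR (S k) ^ 2 * Cmod (a k) * s ^ k)).
    - intros k. change (norm ?x) with (Cmod x). apply dterm_bound; lra.
    - apply (@ex_series_scal_l R_AbsRing R_NormedModule).
      apply (coef_summable a h H). lra. }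
  destruct Hex as [l Hl].
  assert (E1 := is_series_unique _ _ (is_series_Re _ _ Hl)).
  assert (E2 := is_series_unique _ _ (is_series_Im _ _ Hl)).
  unfold Dser. rewrite E1, E2. destruct l. exact Hl.
Qed.

Lemma W_ex a h : PS a h -> forall s, 0 <= s < 1 -> ex_series (fun k => INR (S k) ^ 2 * Cmod (a k) * s ^ k).
Proof. intros H s Hs. apply (coef_summable a h H s Hs). Qed.

Lemma W_ge0 a h : PS a h -> forall s, 0 <= s < 1 -> 0 <= W a s.
Proof.
  intros H s Hs. unfold W. rewrite <- Series_zero. apply Series_le.
  intros n; split; [lra|]. apply Rmult_le_pos. apply Rmult_le_pos. apply pow_le, pos_INR. apply Cmod_ge_0. apply pow_le; lra.
  apply (W_ex a h H s Hs).
Qed.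

Lemma quad a h : PS a h -> forall z u s, 0 < s < 1 -> Cmod z <= s -> Cmod (z + u) <= s ->
  s ^ 2 * Cmod (h (z + u) - h z - u * Dser a z)%C <= Cmod u ^ 2 * W a s.
Proof.
  intros H z u s Hs Hz Hw.
  assert (Hw1 := H (z + u)%C ltac:(unfold unit_disk; lra)).
  assert (Hz1 := H z ltac:(unfold unit_disk; lra)).
  assert (Hd := Dser_correct a h H z ltac:(lra)).
  assert (HS : @is_series C_AbsRing C_NormedModule
     (fun k => (Cpow (z + u) k * a k - Cpow z k * a k - u * dterm a z k)%C)
     (h (z + u) - h z - u * Dser a z)%C).
  { apply (is_series_minus (V:=C_NormedModule)).
    apply (is_series_minus (V:=C_NormedModule)). exact Hw1. exact Hz1.
    apply (is_series_scal (V:=C_NormedModule) u). exact Hd. }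
  assert (HB := CS_bound _ _ (fun k => Cmod u ^ 2 / s ^ 2 * (INR (S k) ^ 2 * Cmod (a k) * s ^ k)) HS).
  rewrite Series_scal_l in HB. fold (W a s) in HB.
  assert (Hs2 : 0 < s ^ 2) by (apply pow_lt; lra).
  cut (Cmod (h (z + u) - h z - u * Dser a z)%C <= Cmod u ^ 2 / s ^ 2 * W a s).
  { intros HH. apply (Rmult_le_compat_l (s^2)) in HH; [|lra].
    replace (s ^ 2 * (Cmod u ^ 2 / s ^ 2 * W a s)) with (Cmod u ^ 2 * W a s) in HH by (field; lra). exact HH. }
  apply HB.
  - apply (@ex_series_scal_l R_AbsRing R_NormedModule). apply (W_ex a h H). lra.
  - intros k.
    replace (Cpow (z + u) k * a k - Cpow z k * a k - u * dterm a z k)%C with (a k * Pk z u k)%C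
      by (unfold Pk, dterm; ring).
    rewrite Cmod_mult.
    assert (P := Pk_bound z u s k ltac:(lra) Hz Hw).
    assert (Ha := Cmod_ge_0 (a k)).
    assert (INR k ^ 2 <= INR (S k) ^ 2) by (rewrite S_INR; generalize (pos_INR k); nra).
    assert (Cmod (Pk z u k) <= Cmod u ^ 2 / s ^ 2 * (INR (S k) ^ 2 * s ^ k)).
    { apply (Rmult_le_reg_l (s ^ 2)); auto. eapply Rle_trans. apply P.
      replace (s ^ 2 * (Cmod u ^ 2 / s ^ 2 * (INR (S k) ^ 2 * s ^ k))) with
        (INR (S k) ^ 2 * (Cmod u ^ 2 * s ^ k)) by (field; lra).
      replace (INR k ^ 2 * Cmod u ^ 2 * s ^ k) with (INR k ^ 2 * (Cmod u ^ 2 * s ^ k)) by ring.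
      apply Rmult_le_compat_r; auto. apply Rmult_le_pos. apply pow2_ge_0. apply pow_le; lra. }
    replace (Cmod u ^ 2 / s ^ 2 * (INR (S k) ^ 2 * Cmod (a k) * s ^ k)) with
      (Cmod (a k) * (Cmod u ^ 2 / s ^ 2 * (INR (S k) ^ 2 * s ^ k))) by ring.
    apply Rmult_le_compat_l; auto.
Qed.

Lemma lip a h : PS a h -> forall z u s, 0 < s < 1 -> Cmod z <= s -> Cmod (z + u) <= s ->
  s ^ 2 * Cmod (Dser a (z + u) - Dser a z)%C <= Cmod u * W a s.
Proof.
  intros H z u s Hs Hz Hw.
  assert (Hd1 := Dser_correct a h H (z + u)%C ltac:(lra)).
  assert (Hd := Dser_correct a h H z ltac:(lra)).
  assert (HS : @is_series C_AbsRing C_NormedModule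
     (fun k => (dterm a (z + u) k - dterm a z k)%C) (Dser a (z + u) - Dser a z)%C).
  { apply (is_series_minus (V:=C_NormedModule)). exact Hd1. exact Hd. }
  assert (HB := CS_bound _ _ (fun k => Cmod u / s ^ 2 * (INR (S k) ^ 2 * Cmod (a k) * s ^ k)) HS).
  rewrite Series_scal_l in HB. fold (W a s) in HB.
  assert (Hs2 : 0 < s ^ 2) by (apply pow_lt; lra).
  cut (Cmod (Dser a (z + u) - Dser a z)%C <= Cmod u / s ^ 2 * W a s).
  { intros HH. apply (Rmult_le_compat_l (s^2)) in HH; [|lra].
    replace (s ^ 2 * (Cmod u / s ^ 2 * W a s)) with (Cmod u * W a s) in HH by (field; lra). exact HH. }
  apply HB.
  - apply (@ex_series_scal_l R_AbsRing R_NormedModule). apply (W_ex a h H). lra.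
  - intros k.
    replace (dterm a (z + u) k - dterm a z k)%C with
      (RtoC (INR k) * a k * (Cpow (z + u) (pred k) - Cpow z (pred k)))%C
      by (unfold dterm; ring).
    rewrite !Cmod_mult, Cmod_R, Rabs_pos_eq by apply pos_INR.
    assert (P := pow_diff_bound z u s (pred k) ltac:(lra) Hz Hw).
    assert (Ha := Cmod_ge_0 (a k)). assert (Hu := Cmod_ge_0 u).
    set (D := Cmod (Cpow (z + u) (pred k) - Cpow z (pred k))) in *.
    assert (HD : 0 <= D) by apply Cmod_ge_0.
    destruct k.
    + change (INR 0) with 0. rewrite !Rmult_0_l.
      apply Rmult_le_pos. apply Rmult_le_pos; auto. left; apply Rinv_0_lt_compat; auto.
      apply Rmult_le_pos. apply Rmult_le_pos; auto. apply pow2_ge_0. apply pow_le; lra.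
    + cbn [pred] in *.
      assert (D <= INR k * Cmod u * s ^ k / s).
      { apply (Rmult_le_reg_l s). lra. replace (s * (INR k * Cmod u * s ^ k / s)) with (INR k * Cmod u * s ^ k) by (field; lra). auto. }
      replace (Cmod u / s ^ 2 * (INR (S (S k)) ^ 2 * Cmod (a (S k)) * s ^ S k)) with
        (INR (S (S k)) ^ 2 * Cmod (a (S k)) * (Cmod u * s ^ k / s)) by (simpl; field; lra).
      assert (INR (S k) * INR k <= INR (S (S k)) ^ 2).
      { rewrite (S_INR (S k)), S_INR. generalize (pos_INR k). nra. }
      assert (0 <= Cmod u * s ^ k / s).
      { apply Rmult_le_pos. apply Rmult_le_pos; auto. apply pow_le; lra. left; apply Rinv_0_lt_compat; lra. }
      assert (0 <= INR (S k)) by apply pos_INR.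
      assert (INR (S k) * Cmod (a (S k)) * D <= INR (S k) * Cmod (a (S k)) * (INR k * (Cmod u * s ^ k / s))).
      { apply Rmult_le_compat_l. apply Rmult_le_pos; auto. 
        replace (INR k * (Cmod u * s ^ k / s)) with (INR k * Cmod u * s ^ k / s) by (field; lra). auto. }
      assert (0 <= Cmod (a (S k)) * (Cmod u * s ^ k / s)) by (apply Rmult_le_pos; auto).
      assert (INR (S k) * INR k * (Cmod (a (S k)) * (Cmod u * s ^ k / s)) <=
              INR (S (S k)) ^ 2 * (Cmod (a (S k)) * (Cmod u * s ^ k / s))) by (apply Rmult_le_compat_r; auto).
      lra.
Qed.

Lemma cont_lip (f : R -> R) t0 d L : 0 < d -> 0 <= L ->
  (forall t, Rabs (t - t0) < d -> Rabs (f t - f t0) <= L * Rabs (t - t0)) ->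
  continuous f t0.
Proof.
  intros Hd HL H.
  unfold continuous. apply filterlim_locally. intros eps.
  assert (He : 0 < Rmin d (eps / (L + 1))).
  { apply Rmin_pos; auto. apply Rdiv_lt_0_compat. apply cond_pos. lra. }
  exists (mkposreal _ He). intros y Hy. change (Rabs (y - t0) < Rmin d (eps / (L + 1))) in Hy.
  change (Rabs (f y - f t0) < eps).
  assert (Hy1 : Rabs (y - t0) < d) by (eapply Rlt_le_trans; [apply Hy| apply Rmin_l]).
  assert (Hy2 : Rabs (y - t0) < eps / (L + 1)) by (eapply Rlt_le_trans; [apply Hy| apply Rmin_r]).
  eapply Rle_lt_trans. apply H; auto.
  assert (L * Rabs (y - t0) <= (L + 1) * Rabs (y - t0)) by (generalize (Rabs_pos (y - t0)); nra).
  assert ((L + 1) * Rabs (y - t0) < eps).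
  { apply (Rmult_lt_compat_l (L+1)) in Hy2; [|lra].
    replace ((L + 1) * (eps / (L + 1))) with (pos eps) in Hy2 by (field; lra). lra. }
  lra.
Qed.

Lemma Cmod_rev (x y : C) : Rabs (Cmod x - Cmod y) <= Cmod (x - y).
Proof.
  apply Rabs_le. split.
  - assert (T := Cmod_triangle (y - x) x). replace (y - x + x)%C with y in T by ring.
    replace (y - x)%C with (- (x - y))%C in T by ring. rewrite Cmod_opp in T. lra.
  - assert (T := Cmod_triangle (x - y) y). replace (x - y + y)%C with x in T by ring. lra.
Qed.

Lemma Cmod_scal_R (t : R) (e : C) : Cmod e <= 1 -> Cmod (RtoC t * e) <= Rabs t.
Proof.
  intros He. rewrite Cmod_mult, Cmod_R. generalize (Rabs_pos t) (Cmod_ge_0 e). nra.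
Qed.

Lemma Dser_lip_line a h : PS a h -> forall (e z0 : C) t0, Cmod e <= 1 ->
  Cmod (z0 + RtoC t0 * e) < 1 ->
  exists d L, 0 < d /\ 0 <= L /\ forall t, Rabs (t - t0) < d ->
   Cmod (Dser a (z0 + RtoC t * e) - Dser a (z0 + RtoC t0 * e))%C <= L * Rabs (t - t0).
Proof.
  intros H e z0 t0 He Hz.
  set (z := (z0 + RtoC t0 * e)%C) in *.
  set (s := (1 + Cmod z) / 2).
  assert (Hs : 0 < s < 1 /\ Cmod z <= s) by (generalize (Cmod_ge_0 z); unfold s; lra).
  assert (HW := W_ge0 a h H s ltac:(lra)).
  exists (s - Cmod z), (W a s / s ^ 2). split; [|split].
  - generalize (Cmod_ge_0 z); unfold s; lra.
  - apply Rmult_le_pos; auto. left; apply Rinv_0_lt_compat, pow_lt; lra.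
  - intros t Ht. set (u := (RtoC (t - t0) * e)%C).
    assert (Hu : Cmod u <= Rabs (t - t0)) by (apply Cmod_scal_R; auto).
    replace (z0 + RtoC t * e)%C with (z + u)%C by (unfold z, u; rewrite RtoC_minus; ring).
    assert (Hzu : Cmod (z + u) <= s) by (generalize (Cmod_triangle z u); lra).
    assert (Hl := lip a h H z u s ltac:(lra) ltac:(lra) Hzu).
    assert (Hs2 : 0 < s ^ 2) by (apply pow_lt; lra).
    apply (Rmult_le_reg_l (s ^ 2)); auto.
    replace (s ^ 2 * (W a s / s ^ 2 * Rabs (t - t0))) with (Rabs (t - t0) * W a s) by (field; lra).
    eapply Rle_trans. apply Hl. apply Rmult_le_compat_r; auto.
Qed.

Lemma Re_sub (c x y : C) : Re (c * x) - Re (c * y) = Re (c * (x - y)).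
Proof. destruct c, x, y; simpl; ring. Qed.

Lemma cont_Re_Dser a h : PS a h -> forall (c e z0 : C) t0, Cmod e <= 1 ->
  Cmod (z0 + RtoC t0 * e) < 1 ->
  continuous (fun t => Re (c * Dser a (z0 + RtoC t * e))) t0.
Proof.
  intros H c e z0 t0 He Hz.
  destruct (Dser_lip_line a h H e z0 t0 He Hz) as [d [L [Hd [HL HH]]]].
  apply (cont_lip _ t0 d (Cmod c * L)); auto.
  apply Rmult_le_pos; auto; apply Cmod_ge_0.
  intros t Ht. rewrite Re_sub.
  eapply Rle_trans. apply re_le_Cmod. rewrite Cmod_mult, Rmult_assoc.
  apply Rmult_le_compat_l. apply Cmod_ge_0. auto.
Qed.

Lemma cont_integrand a h b g : PS a h -> PS b g -> forall (c e : C) t0, Cmod e <= 1 -> Cmod c <= 1 ->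
  Cmod (RtoC t0 * e) < 1 ->
  continuous (fun t => Cmod (Dser a (RtoC t * e) + c * Cconj (Dser b (RtoC t * e)))) t0.
Proof.
  intros Ha Hb c e t0 He Hc Hz.
  assert (Hz' : Cmod (0 + RtoC t0 * e) < 1) by (rewrite Cplus_0_l; auto).
  destruct (Dser_lip_line a h Ha e 0 t0 He Hz') as [d1 [L1 [Hd1 [HL1 HH1]]]].
  destruct (Dser_lip_line b g Hb e 0 t0 He Hz') as [d2 [L2 [Hd2 [HL2 HH2]]]].
  apply (cont_lip _ t0 (Rmin d1 d2) (L1 + L2)). apply Rmin_pos; auto. lra.
  intros t Ht.
  assert (Ht1 : Rabs (t - t0) < d1) by (eapply Rlt_le_trans; [apply Ht| apply Rmin_l]).
  assert (Ht2 : Rabs (t - t0) < d2) by (eapply Rlt_le_trans; [apply Ht| apply Rmin_r]).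
  specialize (HH1 t Ht1). specialize (HH2 t Ht2). rewrite !Cplus_0_l in HH1, HH2.
  eapply Rle_trans. apply Cmod_rev.
  replace (Dser a (RtoC t * e) + c * Cconj (Dser b (RtoC t * e)) -
      (Dser a (RtoC t0 * e) + c * Cconj (Dser b (RtoC t0 * e))))%C with
    ((Dser a (RtoC t * e) - Dser a (RtoC t0 * e)) +
      c * Cconj (Dser b (RtoC t * e) - Dser b (RtoC t0 * e)))%C
    by (rewrite Cminus_conj; ring).
  eapply Rle_trans. apply Cmod_triangle.
  rewrite Cmod_mult, Cmod_conj.
  assert (0 <= Cmod (Dser b (RtoC t * e) - Dser b (RtoC t0 * e))) by apply Cmod_ge_0.
  assert (0 <= Cmod c) by apply Cmod_ge_0.
  assert (Cmod c * Cmod (Dser b (RtoC t * e) - Dser b (RtoC t0 * e)) <= Cmod (Dser b (RtoC t * e) - Dser b (RtoC t0 * e))) by nra.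
  lra.
Qed.

Lemma Re_lin3 (v A B e D : C) (tau : R) :
  Re (v * A) - Re (v * B) - tau * Re (v * (e * D)) = Re (v * (A - B - RtoC tau * e * D)).
Proof. destruct v, A, B, e, D; simpl; ring. Qed.

Lemma deriv_dir a h : PS a h -> forall (v e z0 : C) t0, Cmod e <= 1 ->
  Cmod (z0 + RtoC t0 * e) < 1 ->
  is_derive (fun t : R => Re (v * h (z0 + RtoC t * e)%C)%C) t0 (Re (v * (e * Dser a (z0 + RtoC t0 * e)))%C).
Proof.
  intros H v e z0 t0 He Hz.
  apply is_derive_Reals. intros eps Heps.
  set (z := (z0 + RtoC t0 * e)%C) in *.
  set (s := (1 + Cmod z) / 2).
  assert (Hs : 0 < s < 1 /\ Cmod z <= s) by (generalize (Cmod_ge_0 z); unfold s; lra).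
  assert (HW := W_ge0 a h H s ltac:(lra)).
  assert (Hv := Cmod_ge_0 v).
  assert (Hs2 : 0 < s ^ 2) by (apply pow_lt; lra).
  set (K := Cmod v * W a s + 1).
  assert (HK : 0 < K) by (unfold K; nra).
  assert (Hd : 0 < Rmin (s - Cmod z) (eps * s ^ 2 / K)).
  { apply Rmin_pos. generalize (Cmod_ge_0 z); unfold s; lra.
    apply Rdiv_lt_0_compat; auto. nra. }
  exists (mkposreal _ Hd). intros tau Htau0 Htau. cbn [pos] in Htau.
  assert (Ht1 : Rabs tau < s - Cmod z) by (eapply Rlt_le_trans; [apply Htau| apply Rmin_l]).
  assert (Ht2 : Rabs tau < eps * s ^ 2 / K) by (eapply Rlt_le_trans; [apply Htau| apply Rmin_r]).
  set (u := (RtoC tau * e)%C).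
  assert (Hu : Cmod u <= Rabs tau) by (apply Cmod_scal_R; auto).
  replace (z0 + RtoC (t0 + tau) * e)%C with (z + u)%C by (unfold z, u; rewrite RtoC_plus; ring).
  assert (Hzu : Cmod (z + u) <= s) by (generalize (Cmod_triangle z u); lra).
  assert (Hq := quad a h H z u s ltac:(lra) ltac:(lra) Hzu).
  fold z.
  replace ((Re (v * h (z + u)%C)%C - Re (v * h z)%C) / tau - Re (v * (e * Dser a z))%C)
    with (Re (v * (h (z + u)%C - h z - RtoC tau * e * Dser a z))%C / tau)
    by (rewrite <- Re_lin3; field; auto).
  fold u.
  set (X := (h (z + u) - h z - u * Dser a z)%C) in *.
  assert (HX : Cmod X <= Cmod u ^ 2 * W a s / s ^ 2).
  { apply (Rmult_le_reg_l (s ^ 2)); auto.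
    replace (s ^ 2 * (Cmod u ^ 2 * W a s / s ^ 2)) with (Cmod u ^ 2 * W a s) by (field; lra). auto. }
  assert (Htp : 0 < Rabs tau) by (apply Rabs_pos_lt; auto).
  unfold Rdiv. rewrite Rabs_mult, Rabs_inv.
  assert (HR : Rabs (Re (v * X)) <= Cmod v * Cmod X) by (rewrite <- Cmod_mult; apply re_le_Cmod).
  assert (Hu2 : Cmod u ^ 2 <= Rabs tau ^ 2).
  { apply pow_incr. split; auto. apply Cmod_ge_0. }
  assert (HX2 : Cmod X <= Rabs tau ^ 2 * W a s / s ^ 2).
  { eapply Rle_trans. apply HX. unfold Rdiv. apply Rmult_le_compat_r. left; apply Rinv_0_lt_compat; auto.
    apply Rmult_le_compat_r; auto. }
  apply (Rmult_lt_reg_r (Rabs tau)); auto.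
  rewrite Rmult_assoc, Rinv_l, Rmult_1_r by lra.
  eapply Rle_lt_trans. apply HR.
  assert (Cmod v * Cmod X <= Cmod v * (Rabs tau ^ 2 * W a s / s ^ 2)) by (apply Rmult_le_compat_l; auto).
  eapply Rle_lt_trans. apply H0.
  replace (Cmod v * (Rabs tau ^ 2 * W a s / s ^ 2)) with (Rabs tau * (Rabs tau * (Cmod v * W a s)) / s ^ 2) by (field; lra).
  assert (Rabs tau * (Cmod v * W a s) < eps * s ^ 2).
  { assert (Rabs tau * K < eps * s ^ 2).
    { apply (Rmult_lt_compat_r K) in Ht2; auto.
      replace (eps * s ^ 2 / K * K) with (eps * s ^ 2) in Ht2 by (field; lra). auto. }
    unfold K in H1. nra. }
  apply (Rmult_lt_reg_r (s ^ 2)); auto.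
  replace (Rabs tau * (Rabs tau * (Cmod v * W a s)) / s ^ 2 * s ^ 2) with (Rabs tau * (Rabs tau * (Cmod v * W a s))) by (field; lra).
  replace (eps * Rabs tau * s ^ 2) with (Rabs tau * (eps * s ^ 2)) by ring.
  apply Rmult_lt_compat_l; auto.
Qed.

Lemma Derive_comb a h b g : PS a h -> PS b g -> forall z, Cmod z < 1 ->
  forall (v1 v2 e : C), Cmod e <= 1 -> forall F : R -> R,
  (forall t, F t = Re (v1 * h (z + RtoC t * e)%C)%C + Re (v2 * g (z + RtoC t * e)%C)%C) ->
  Derive F 0 = Re (v1 * (e * Dser a z))%C + Re (v2 * (e * Dser b z))%C.
Proof.
  intros Ha Hb z Hz v1 v2 e He F HF.
  rewrite (Derive_ext _ _ _ HF).
  assert (Ez : (z + RtoC 0 * e)%C = z) by (apply C_eq; simpl; ring).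
  assert (Hz' : Cmod (z + RtoC 0 * e)%C < 1) by (rewrite Ez; auto).
  pose proof (deriv_dir a h Ha v1 e z 0 He Hz') as D1.
  pose proof (deriv_dir b g Hb v2 e z 0 He Hz') as D2.
  rewrite Ez in D1, D2.
  apply is_derive_unique.
  apply (is_derive_plus _ _ _ _ _ D1 D2).
Qed.

Lemma dz_dzb a h b g : PS a h -> PS b g -> forall z, unit_disk z ->
  dz (fun w => Cplus (h w) (Cconj (g w))) z = Dser a z /\
  dzb (fun w => Cplus (h w) (Cconj (g w))) z = Cconj (Dser b z).
Proof.
  intros Ha Hb z Hz. unfold unit_disk in Hz.
  assert (E1 : forall t, Cplus z (t, 0) = (z + RtoC t * RtoC 1)%C) by (intros; apply C_eq; simpl; ring).
  assert (E2 : forall t, Cplus z (0, t) = (z + RtoC t * Ci)%C) by (intros; apply C_eq; simpl; ring).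
  assert (He1 : Cmod (RtoC 1) <= 1) by (rewrite Cmod_1; lra).
  assert (He2 : Cmod Ci <= 1) by (rewrite Cmod_Ci; lra).
  assert (Dxf : Derive (fun t => fst (Cplus (h (Cplus z (t, 0))) (Cconj (g (Cplus z (t, 0)))))) 0
     = Re (RtoC 1 * (RtoC 1 * Dser a z))%C + Re (RtoC 1 * (RtoC 1 * Dser b z))%C).
  { apply (Derive_comb a h b g Ha Hb z Hz). auto.
    intros t. rewrite E1. destruct (h (z + RtoC t * RtoC 1)%C), (g (z + RtoC t * RtoC 1)%C); simpl; ring. }
  assert (Dxs : Derive (fun t => snd (Cplus (h (Cplus z (t, 0))) (Cconj (g (Cplus z (t, 0)))))) 0
     = Re ((- Ci) * (RtoC 1 * Dser a z))%C + Re (Ci * (RtoC 1 * Dser b z))%C).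
  { apply (Derive_comb a h b g Ha Hb z Hz). auto.
    intros t. rewrite E1. destruct (h (z + RtoC t * RtoC 1)%C), (g (z + RtoC t * RtoC 1)%C); simpl; ring. }
  assert (Dyf : Derive (fun t => fst (Cplus (h (Cplus z (0, t))) (Cconj (g (Cplus z (0, t)))))) 0
     = Re (RtoC 1 * (Ci * Dser a z))%C + Re (RtoC 1 * (Ci * Dser b z))%C).
  { apply (Derive_comb a h b g Ha Hb z Hz). auto.
    intros t. rewrite E2. destruct (h (z + RtoC t * Ci)%C), (g (z + RtoC t * Ci)%C); simpl; ring. }
  assert (Dys : Derive (fun t => snd (Cplus (h (Cplus z (0, t))) (Cconj (g (Cplus z (0, t)))))) 0
     = Re ((- Ci) * (Ci * Dser a z))%C + Re (Ci * (Ci * Dser b z))%C).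
  { apply (Derive_comb a h b g Ha Hb z Hz). auto.
    intros t. rewrite E2. destruct (h (z + RtoC t * Ci)%C), (g (z + RtoC t * Ci)%C); simpl; ring. }
  unfold dz, dzb, dx, dy. rewrite Dxf, Dxs, Dyf, Dys.
  destruct (Dser a z) as [p q], (Dser b z) as [p' q'].
  split; apply C_eq; simpl; field.
Qed.

Lemma qc_pointwise (K : R) (A B X : R) : 1 <= K -> 0 <= B -> B * B < A * A -> 0 <= A ->
  (A + B) ^ 2 <= K * (A ^ 2 - B ^ 2) -> A - B <= X -> A + B <= K * X.
Proof.
  intros HK HB HAB HA Hq HX.
  assert (A > B) by nra.
  assert (A + B <= K * (A - B)).
  { apply (Rmult_le_reg_r (A + B)). lra.
    replace (K * (A - B) * (A + B)) with (K * (A ^ 2 - B ^ 2)) by ring. nra. }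
  nra.
Qed.

Lemma ell_le_M f theta r M : 0 < r < 1 -> Rbar_le (ell_star1 f theta) (Finite M) ->
  ell_star f theta r <= M.
Proof.
  intros Hr H. unfold ell_star1 in H.
  destruct (Lub_Rbar_correct (fun x => exists r, 0 < r < 1 /\ x = ell_star f theta r)) as [Hub _].
  assert (H1 := Hub (ell_star f theta r) (ex_intro _ r (conj Hr eq_refl))).
  exact (Rbar_le_trans _ _ _ H1 H).
Qed.

Lemma ray_ineq (K : R) a h b g : PS a h -> PS b g -> 1 <= K ->
  K_quasiconformal K (fun z => Cplus (h z) (Cconj (g z))) ->
  forall theta r, 0 < r < 1 ->
  Cmod (h (RtoC r * eitheta theta)%C - h (RtoC 0)) + Cmod (g (RtoC r * eitheta theta)%C - g (RtoC 0))
   <= K * ell_star (fun z => Cplus (h z) (Cconj (g z))) theta r.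
Proof.
  intros Ha Hb HK Hqc theta r Hr.
  set (f := fun z => Cplus (h z) (Cconj (g z))).
  set (E := eitheta theta).
  assert (HE : Cmod E <= 1) by (unfold E; rewrite E_mod; lra).
  set (c := eitheta (-2 * theta)).
  assert (Hc : Cmod c <= 1) by (unfold c; rewrite E_mod; lra).
  destruct (unit_for (h (RtoC r * E)%C - h (RtoC 0))%C) as [v1 [Hv1 Hre1]].
  destruct (unit_for (g (RtoC r * E)%C - g (RtoC 0))%C) as [v2 [Hv2 Hre2]].
  set (phi := fun t : R => Re (v1 * h (0 + RtoC t * E)%C)%C + Re (v2 * g (0 + RtoC t * E)%C)%C).
  set (dphi := fun t : R => Re ((v1 * E) * Dser a (0 + RtoC t * E))%C + Re ((v2 * E) * Dser b (0 + RtoC t * E))%C).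
  assert (Hin : forall t, 0 <= t <= r -> Cmod (0 + RtoC t * E)%C < 1).
  { intros t Ht. rewrite Cplus_0_l, Cmod_mult, Cmod_R, Rabs_pos_eq by lra. unfold E; rewrite E_mod. lra. }
  assert (HI : is_RInt dphi 0 r (minus (phi r) (phi 0))).
  { apply (@is_RInt_derive R_CompleteNormedModule).
    - intros x Hx. rewrite Rmin_left, Rmax_right in Hx by lra.
      unfold dphi. rewrite <- !Cmult_assoc.
      apply (is_derive_plus (fun t => Re (v1 * h (0 + RtoC t * E)%C)%C) (fun t => Re (v2 * g (0 + RtoC t * E)%C)%C)).
      apply (deriv_dir a h Ha v1 E 0 x HE (Hin x Hx)).
      apply (deriv_dir b g Hb v2 E 0 x HE (Hin x Hx)).
    - intros x Hx. rewrite Rmin_left, Rmax_right in Hx by lra.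
      unfold dphi.
      apply (continuous_plus (fun t => Re ((v1 * E) * Dser a (0 + RtoC t * E))%C) (fun t => Re ((v2 * E) * Dser b (0 + RtoC t * E))%C)).
      apply (cont_Re_Dser a h Ha (v1 * E) E 0 x HE (Hin x Hx)).
      apply (cont_Re_Dser b g Hb (v2 * E) E 0 x HE (Hin x Hx)). }
  assert (Hval : phi r - phi 0 = Cmod (h (RtoC r * E)%C - h (RtoC 0)) + Cmod (g (RtoC r * E)%C - g (RtoC 0))).
  { unfold phi.
    assert (EE : (0 + RtoC r * E)%C = (RtoC r * E)%C) by ring. rewrite EE.
    replace (0 + RtoC 0 * E)%C with (RtoC 0) by (apply C_eq; simpl; ring).
    rewrite <- Hre1, <- Hre2, <- (Re_sub v1), <- (Re_sub v2).  ring. }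
  change (minus (phi r) (phi 0)) with (phi r - phi 0) in HI.
  rewrite Hval in HI. rewrite <- (is_RInt_unique _ _ _ _ HI).
  set (nice := fun rho : R => Cmod (Dser a (RtoC rho * E) + c * Cconj (Dser b (RtoC rho * E)))%C).
  set (orig := fun rho : R => Cmod (Cplus (dz f (Cmult (RtoC rho) E)) (Cmult c (dzb f (Cmult (RtoC rho) E))))).
  assert (Heq : forall x, 0 < x < r -> orig x = nice x).
  { intros x Hx. unfold orig, nice.
    assert (Hu : unit_disk (RtoC x * E)%C).
    { unfold unit_disk. rewrite Cmod_mult, Cmod_R, Rabs_pos_eq by lra. unfold E; rewrite E_mod. lra. }
    destruct (dz_dzb a h b g Ha Hb _ Hu) as [D1 D2]. fold f in D1, D2.
    rewrite D1, D2. reflexivity. }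
  assert (Hnice : ex_RInt nice 0 r).
  { apply (@ex_RInt_continuous R_CompleteNormedModule). intros x Hx. rewrite Rmin_left, Rmax_right in Hx by lra.
    apply (cont_integrand a h b g Ha Hb c E x HE Hc).
    rewrite Cmod_mult, Cmod_R, Rabs_pos_eq by lra. unfold E; rewrite E_mod. lra. }
  assert (Horig : ex_RInt orig 0 r).
  { apply (ex_RInt_ext nice). intros x Hx. rewrite Rmin_left, Rmax_right in Hx by lra.
    symmetry; apply Heq; auto. auto. }
  change (ell_star f theta r) with (RInt orig 0 r).
  replace (K * RInt orig 0 r) with (RInt (fun x => K * orig x) 0 r)
    by exact (@RInt_scal R_CompleteNormedModule orig 0 r K Horig).
  apply RInt_le. lra.
  exists (Cmod (h (RtoC r * E)%C - h (RtoC 0)) + Cmod (g (RtoC r * E)%C - g (RtoC 0))). auto.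
  apply (@ex_RInt_scal R_NormedModule orig 0 r K Horig).
  intros x Hx.
  assert (Hu : unit_disk (RtoC x * E)%C).
  { unfold unit_disk. rewrite Cmod_mult, Cmod_R, Rabs_pos_eq by lra. unfold E; rewrite E_mod. lra. }
  destruct Hqc as [_ [Hsp Hq]].
  specialize (Hsp _ Hu). specialize (Hq _ Hu). fold f in Hsp, Hq.
  destruct (dz_dzb a h b g Ha Hb _ Hu) as [D1 D2]. fold f in D1, D2.
  unfold orig. rewrite D1, D2. rewrite D1, D2 in Hsp, Hq. rewrite Cmod_conj in Hsp, Hq.
  unfold dphi. replace (0 + RtoC x * E)%C with (RtoC x * E)%C by ring.
  set (P := Dser a (RtoC x * E)%C) in *. set (Q := Dser b (RtoC x * E)%C) in *.
  assert (T1 : Re (v1 * E * P)%C <= Cmod P).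
  { eapply Rle_trans. apply Re_mul_le. rewrite Cmod_mult.
    assert (0 <= Cmod v1) by apply Cmod_ge_0. assert (0 <= Cmod E) by apply Cmod_ge_0.
    assert (0 <= Cmod P) by apply Cmod_ge_0.
    assert (Cmod v1 * Cmod E <= 1) by nra. nra. }
  assert (T2 : Re (v2 * E * Q)%C <= Cmod Q).
  { eapply Rle_trans. apply Re_mul_le. rewrite Cmod_mult.
    assert (0 <= Cmod v2) by apply Cmod_ge_0. assert (0 <= Cmod E) by apply Cmod_ge_0.
    assert (0 <= Cmod Q) by apply Cmod_ge_0.
    assert (Cmod v2 * Cmod E <= 1) by nra. nra. }
  assert (T3 : Cmod P - Cmod Q <= Cmod (Cplus P (Cmult c (Cconj Q)))).
  { assert (T := Cmod_triangle (Cplus P (Cmult c (Cconj Q))) (- (c * Cconj Q))%C).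
    replace (Cplus P (Cmult c (Cconj Q)) + - (c * Cconj Q))%C with P in T by ring.
    rewrite Cmod_opp, Cmod_mult, Cmod_conj in T.
    assert (0 <= Cmod Q) by apply Cmod_ge_0. assert (0 <= Cmod c) by apply Cmod_ge_0. nra. }
  assert (T4 := qc_pointwise K (Cmod P) (Cmod Q) _ HK (Cmod_ge_0 Q) ltac:(nra) (Cmod_ge_0 P) Hq T3).
  lra.
Qed.

Fixpoint csum (f : nat -> C) (N : nat) : C :=
  match N with O => RtoC 0 | S m => (csum f m + f m)%C end.

Lemma csum_bound (f : nat -> C) N B : (forall j, (j < N)%nat -> Cmod (f j) <= B) ->
  Cmod (csum f N) <= INR N * B.
Proof.
  induction N; intros H.
  - simpl. rewrite Cmod_0. lra.
  - simpl csum. eapply Rle_trans. apply Cmod_triangle.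
    rewrite S_INR. assert (IH := IHN (fun j Hj => H j ltac:(lia))). specialize (H N ltac:(lia)). lra.
Qed.

Lemma csum_geom beta N : ((eitheta beta - 1) * csum (fun j => eitheta (INR j * beta)) N
   = eitheta (INR N * beta) - 1)%C.
Proof.
  induction N.
  - simpl. rewrite Rmult_0_l, E_0. ring.
  - simpl csum. rewrite Cmult_plus_distr_l, IHN.
    rewrite S_INR, Rmult_plus_distr_r, Rmult_1_l, Rplus_comm, E_add. ring.
Qed.

Lemma E_full (k n N : nat) : (0 < N)%nat ->
  eitheta (INR N * ((INR k - INR n) * (2 * PI / INR N))) = RtoC 1.
Proof.
  intros HN. assert (HN' : INR N <> 0) by (apply not_0_INR; lia).
  replace (INR N * ((INR k - INR n) * (2 * PI / INR N))) with
    (- (2 * INR n * PI) + 2 * INR k * PI) by (field; auto).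
  apply C_eq; unfold eitheta; simpl.
  - rewrite cos_period, cos_neg. replace (2 * INR n * PI) with (0 + 2 * INR n * PI) by ring.
    rewrite cos_period. apply cos_0.
  - rewrite sin_period, sin_neg. replace (2 * INR n * PI) with (0 + 2 * INR n * PI) by ring.
    rewrite sin_period, sin_0. ring.
Qed.

Lemma E_ne1 (k n N : nat) : (k < N)%nat -> (n < N)%nat -> k <> n ->
  eitheta ((INR k - INR n) * (2 * PI / INR N)) <> RtoC 1.
Proof.
  intros Hk Hn Hkn HE.
  assert (HN : 0 < INR N) by (apply lt_0_INR; lia).
  set (x := (INR k - INR n) * PI / INR N).
  assert (Hb : (INR k - INR n) * (2 * PI / INR N) = 2 * x) by (unfold x; field; lra).
  rewrite Hb in HE. apply (f_equal fst) in HE. unfold eitheta in HE; simpl in HE.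
  rewrite cos_2a_sin in HE.
  assert (Hs : sin x = 0) by nra.
  assert (HPI := PI_RGT_0).
  assert (HkN : INR k < INR N) by (apply lt_INR; auto).
  assert (HnN : INR n < INR N) by (apply lt_INR; auto).
  generalize (pos_INR k) (pos_INR n); intros Hk0 Hn0.
  destruct (Nat.lt_total k n) as [H|[H|H]]; [|lia|].
  - assert (INR k < INR n) by (apply lt_INR; auto).
    assert (0 < - x < PI).
    { unfold x. split.
      - replace (- ((INR k - INR n) * PI / INR N)) with ((INR n - INR k) * PI / INR N) by (field; lra).
        apply Rdiv_lt_0_compat; [nra|lra].
      - apply (Rmult_lt_reg_r (INR N)); auto.
        replace (- ((INR k - INR n) * PI / INR N) * INR N) with ((INR n - INR k) * PI) by (field; lra). nra. }
    assert (0 < sin (- x)) by (apply sin_gt_0; lra). rewrite sin_neg in *. lra.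
  - assert (INR n < INR k) by (apply lt_INR; auto).
    assert (0 < x < PI).
    { unfold x. split.
      - apply Rdiv_lt_0_compat; [nra|lra].
      - apply (Rmult_lt_reg_r (INR N)); auto.
        replace ((INR k - INR n) * PI / INR N * INR N) with ((INR k - INR n) * PI) by (field; lra). nra. }
    assert (0 < sin x) by (apply sin_gt_0; lra). lra.
Qed.

Definition Gk (k n N : nat) : C :=
  csum (fun j => eitheta (INR j * ((INR k - INR n) * (2 * PI / INR N)))) N.

Lemma Gk_zero k n N : (k < N)%nat -> (n < N)%nat -> k <> n -> Gk k n N = RtoC 0.
Proof.
  intros Hk Hn Hkn. unfold Gk.
  assert (H1 := csum_geom ((INR k - INR n) * (2 * PI / INR N)) N). rewrite (E_full k n N ltac:(lia)) in H1.
  set (beta := (INR k - INR n) * (2 * PI / INR N)) in *.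
  assert (H2 : (eitheta beta - 1)%C <> RtoC 0).
  { intros H. apply (E_ne1 k n N Hk Hn Hkn). fold beta.
    apply (f_equal (fun x => x + 1)%C) in H. rewrite Cplus_0_l in H. rewrite <- H. ring. }
  replace (RtoC 1 - 1)%C with (RtoC 0) in H1 by (apply C_eq; simpl; ring).
  apply (f_equal (Cmult (/ (eitheta beta - 1)))) in H1.
  rewrite Cmult_assoc, Cinv_l, Cmult_1_l, Cmult_0_r in H1 by auto. exact H1.
Qed.

Lemma csum_one N : csum (fun _ => RtoC 1) N = RtoC (INR N).
Proof.
  induction N. simpl. reflexivity.
  simpl csum. rewrite IHN, S_INR. apply C_eq; simpl; ring.
Qed.

Lemma Gk_n n N : Gk n n N = RtoC (INR N).
Proof.
  unfold Gk. rewrite <- csum_one.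
  assert (forall M, csum (fun j => eitheta (INR j * ((INR n - INR n) * (2 * PI / INR N)))) M = csum (fun _ => RtoC 1) M).
  { induction M. reflexivity. simpl csum. rewrite IHM. f_equal.
    replace (INR M * ((INR n - INR n) * (2 * PI / INR N))) with 0 by ring. apply E_0. }
  apply H.
Qed.

Lemma Gk_bound k n N : Cmod (Gk k n N) <= INR N.
Proof.
  unfold Gk. replace (INR N) with (INR N * 1) by ring. apply csum_bound.
  intros. rewrite E_mod. lra.
Qed.

Lemma is_series_zero : @is_series C_AbsRing C_NormedModule (fun _ => RtoC 0) (RtoC 0).
Proof.
  unfold is_series. apply filterlim_ext with (fun _ => RtoC 0).
  - intros N. induction N. rewrite sum_O. reflexivity.
    rewrite sum_Sn, <- IHN. apply C_eq; simpl; ring.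
  - apply filterlim_const.
Qed.

Lemma csum_series (N : nat) (F : nat -> nat -> C) (L : nat -> C) :
  (forall j, (j < N)%nat -> @is_series C_AbsRing C_NormedModule (F j) (L j)) ->
  @is_series C_AbsRing C_NormedModule (fun k => csum (fun j => F j k) N) (csum L N).
Proof.
  induction N; intros H.
  - simpl. apply is_series_zero.
  - simpl csum. apply (is_series_plus (V:=C_NormedModule)).
    apply IHN. intros; apply H; lia. apply H; lia.
Qed.

Lemma sum_n_zero (a : nat -> C) p : (forall k, (k <= p)%nat -> a k = RtoC 0) -> sum_n a p = RtoC 0.
Proof.
  induction p; intros H.
  - rewrite sum_O. apply H; lia.
  - rewrite sum_Sn, IHp by (intros; apply H; lia). rewrite (H (S p)) by lia.
    apply C_eq; simpl; ring.
Qed.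

Lemma sum_n_single (a : nat -> C) n p : (n <= p)%nat ->
  (forall k, (k <= p)%nat -> k <> n -> a k = RtoC 0) -> sum_n a p = a n.
Proof.
  induction p; intros Hn H.
  - assert (n = 0%nat) by lia. subst. rewrite sum_O. reflexivity.
  - rewrite sum_Sn. destruct (Nat.eq_dec n (S p)) as [->|Hne].
    + rewrite sum_n_zero by (intros; apply H; lia). apply C_eq; simpl; ring.
    + rewrite IHp by (try lia; intros; apply H; lia). rewrite (H (S p)) by lia.
      apply C_eq; simpl; ring.
Qed.

Lemma csum_sub (f g : nat -> C) (kap : C) N :
  csum (fun j => f j * (g j - kap))%C N = (csum (fun j => f j * g j)%C N - kap * csum f N)%C.
Proof. induction N; simpl csum. apply C_eq; simpl; ring. rewrite IHN. ring. Qed.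

Lemma csum_scal (x : C) (f : nat -> C) N : csum (fun j => x * f j)%C N = (x * csum f N)%C.
Proof. induction N; simpl csum. apply C_eq; simpl; ring. rewrite IHN. ring. Qed.

Lemma csum_ext (f g : nat -> C) N : (forall j, (j < N)%nat -> f j = g j) -> csum f N = csum g N.
Proof. induction N; intros H; simpl; auto. rewrite IHN, H; auto. Qed.

Lemma extract_N (c : nat -> C) (F : R -> C) (kap : C) (B : R) (n N : nat) :
  (1 <= n)%nat -> (n < N)%nat -> ex_series (fun k => Cmod (c k)) ->
  (forall th, @is_series C_AbsRing C_NormedModule (fun k => c k * eitheta (INR k * th))%C (F th)) ->
  (forall th, 0 <= th <= 2 * PI -> Cmod (F th - kap)%C <= B) ->
  Cmod (c n) <= B + Series (fun k => Cmod (c (N + k)%nat)).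
Proof.
  intros Hn HnN Hc HF HB.
  assert (HN : 0 < INR N) by (apply lt_0_INR; lia).
  set (th := fun j : nat => INR j * (2 * PI / INR N)).
  assert (Hth : forall j, (j < N)%nat -> 0 <= th j <= 2 * PI).
  { intros j Hj. unfold th. assert (INR j < INR N) by (apply lt_INR; auto).
    assert (HPI := PI_RGT_0). generalize (pos_INR j); intros.
    split. apply Rmult_le_pos; auto. apply Rlt_le, Rdiv_lt_0_compat; lra.
    replace (2 * PI) with (INR N * (2 * PI / INR N)) at 2 by (field; lra).
    apply Rmult_le_compat_r. apply Rlt_le, Rdiv_lt_0_compat; lra. lra. }
  set (S := csum (fun j => eitheta (- INR n * th j) * (F (th j) - kap))%C N).
  assert (HS : Cmod S <= INR N * B).
  { apply csum_bound. intros j Hj. rewrite Cmod_mult, E_mod, Rmult_1_l. apply HB, Hth; auto. }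
  set (V := csum (fun j => eitheta (- INR n * th j) * F (th j))%C N).
  assert (HSV : S = V).
  { unfold S, V. rewrite csum_sub.
    replace (csum (fun j => eitheta (- INR n * th j)) N) with (Gk 0 n N).
    rewrite Gk_zero by lia. ring.
    unfold Gk. apply csum_ext. intros j Hj. f_equal. unfold th. simpl INR. ring. }
  assert (HV : @is_series C_AbsRing C_NormedModule (fun k => c k * Gk k n N)%C V).
  { apply (is_series_ext (V:=C_NormedModule)) with
      (fun k => csum (fun j => eitheta (- INR n * th j) * (c k * eitheta (INR k * th j)))%C N).
    - intros k. unfold Gk. rewrite <- csum_scal. apply csum_ext. intros j Hj.
      rewrite Cmult_assoc, (Cmult_comm _ (c k)), <- Cmult_assoc, <- E_add. f_equal. f_equal.
      unfold th. ring.
    - apply (csum_series N (fun j k => eitheta (- INR n * th j) * (c k * eitheta (INR k * th j)))%C).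
      intros j Hj. apply (is_series_scal (V:=C_NormedModule)). apply HF. }
  assert (Hsum : sum_n (fun k => c k * Gk k n N)%C (pred N) = (c n * RtoC (INR N))%C).
  { rewrite (sum_n_single _ n) by (try lia; intros k Hk Hkn; rewrite Gk_zero by lia; apply Cmult_0_r).
    rewrite Gk_n. reflexivity. }
  assert (HV2 : @is_series C_AbsRing C_NormedModule (fun k => c (N + k)%nat * Gk (N + k) n N)%C
                  (V - RtoC (INR N) * c n)%C).
  { apply (is_series_incr_n (V:=C_NormedModule) (fun k => c k * Gk k n N)%C N). lia.
    match goal with |- context [sum_n ?a ?p] => replace (sum_n a p) with (c n * RtoC (INR N))%C
      by (symmetry; exact Hsum) end.
    match goal with |- is_series _ ?l => replace l with V end.
    exact HV.
    change (V = Cplus (V - RtoC (INR N) * c n)%C (sum_n (fun k => (c k * Gk k n N)%C) (pred N))).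
    rewrite Hsum. ring. }
  assert (Hex : ex_series (fun k => Cmod (c (N + k)%nat))) by (apply (ex_series_incr_n (fun k => Cmod (c k)) N); auto).
  assert (HB2 := CS_bound _ _ (fun k => INR N * Cmod (c (N + k)%nat)) HV2).
  rewrite Series_scal_l in HB2.
  specialize (HB2 (@ex_series_scal_l R_AbsRing R_NormedModule (INR N) _ Hex)).
  assert (HB3 : Cmod (V - RtoC (INR N) * c n)%C <= INR N * Series (fun k => Cmod (c (N + k)%nat))).
  { apply HB2. intros k. rewrite Cmod_mult, Rmult_comm. apply Rmult_le_compat_r. apply Cmod_ge_0.
    apply Gk_bound. }
  assert (T := Cmod_triangle V (- (V - RtoC (INR N) * c n))%C).
  replace (V + - (V - RtoC (INR N) * c n))%C with (RtoC (INR N) * c n)%C in T by ring.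
  rewrite Cmod_opp, Cmod_mult, Cmod_R, Rabs_pos_eq in T by lra.
  rewrite HSV in HS.
  apply (Rmult_le_reg_l (INR N)); auto. lra.
Qed.

Lemma extract (c : nat -> C) (F : R -> C) (kap : C) (B : R) (n : nat) :
  (1 <= n)%nat -> ex_series (fun k => Cmod (c k)) ->
  (forall th, @is_series C_AbsRing C_NormedModule (fun k => c k * eitheta (INR k * th))%C (F th)) ->
  (forall th, 0 <= th <= 2 * PI -> Cmod (F th - kap)%C <= B) ->
  Cmod (c n) <= B.
Proof.
  intros Hn Hc HF HB.
  destruct (Rle_or_lt (Cmod (c n)) B) as [H|H]; auto. exfalso.
  assert (Hs := Series_correct _ Hc).
  apply is_series_Reals in Hs.
  assert (He : 0 < Cmod (c n) - B) by lra.
  destruct (Hs _ He) as [N0 HN0].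
  set (N := S (Nat.max N0 n)).
  assert (H1 := extract_N c F kap B n N Hn ltac:(unfold N; lia) Hc HF HB).
  assert (H2 := Series_incr_n (fun k => Cmod (c k)) N ltac:(unfold N; lia) Hc).
  specialize (HN0 (pred N) ltac:(unfold N; simpl; lia)).
  unfold R_dist in HN0.
  apply Rabs_lt_between in HN0. lra.
Qed.

Lemma bernoulli d n : 0 <= d <= 1 -> 1 - INR n * d <= (1 - d) ^ n.
Proof.
  intros Hd. induction n.
  - simpl. lra.
  - rewrite S_INR. simpl. assert (0 <= INR n) by apply pos_INR.
    assert ((1 - d) * (1 - INR n * d) <= (1 - d) * (1 - d) ^ n) by (apply Rmult_le_compat_l; lra).
    nra.
Qed.

Lemma limit_r (X Y : R) n : 0 <= X -> (forall r, 0 < r < 1 -> X * r ^ n <= Y) -> X <= Y.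
Proof.
  intros HX H. destruct (Rle_or_lt X Y) as [|HXY]; auto. exfalso.
  assert (Hn := pos_INR n).
  set (d := Rmin (1/2) ((X - Y) / (2 * (INR n * X + 1)))).
  assert (Hd : 0 < d <= 1/2).
  { unfold d. split. apply Rmin_pos. lra. apply Rdiv_lt_0_compat. lra. nra. apply Rmin_l. }
  assert (Hd2 : d <= (X - Y) / (2 * (INR n * X + 1))) by apply Rmin_r.
  assert (Hd3 : (INR n * X + 1) * d <= (X - Y) / 2).
  { apply (Rmult_le_compat_l (INR n * X + 1)) in Hd2; [|nra].
    replace ((INR n * X + 1) * ((X - Y) / (2 * (INR n * X + 1)))) with ((X - Y) / 2) in Hd2 by (field; nra). lra. }
  specialize (H (1 - d) ltac:(lra)).
  assert (B := bernoulli d n ltac:(lra)).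
  assert (X * (1 - INR n * d) <= X * (1 - d) ^ n) by (apply Rmult_le_compat_l; auto).
  nra.
Qed.

Lemma pow_ray (r th : R) k : Cpow (RtoC r * eitheta th)%C k = (RtoC (r ^ k) * eitheta (INR k * th))%C.
Proof. rewrite Cpow_mult_l, E_pow, RtoC_pow. reflexivity. Qed.

Theorem part1 : forall (K M : R) (a b : nat -> C) (h g : C -> C),
    1 <= K -> 0 < M ->
    (forall z, unit_disk z -> is_pseries a z (h z)) ->
    (forall z, unit_disk z ->
       is_pseries (fun n => match n with O => RtoC 0 | S _ => b n end) z (g z)) ->
    K_quasiconformal K (fun z => Cplus (h z) (Cconj (g z))) ->
    (forall theta, 0 <= theta <= 2 * PI ->
       Rbar_le (ell_star1 (fun z => Cplus (h z) (Cconj (g z))) theta) (Finite M)) ->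
    forall n : nat, (1 <= n)%nat -> Cmod (a n) + Cmod (b n) <= K * M.
Proof.
  intros K M a b h g HK HM Hh Hg Hqc Hell n Hn.
  set (b' := fun n => match n with O => RtoC 0 | S _ => b n end) in Hg.
  assert (Ha : PS a h) by exact Hh. assert (Hb : PS b' g) by exact Hg.
  apply (limit_r _ _ n). generalize (Cmod_ge_0 (a n)) (Cmod_ge_0 (b n)); lra.
  intros r Hr.
  destruct (unit_for (a n)) as [l [Hl Hla]].
  destruct (unit_for (b n)) as [m [Hm Hmb]].
  set (c := fun k => ((l * a k + m * b' k) * RtoC (r ^ k))%C).
  set (F := fun th => (l * h (RtoC r * eitheta th)%C + m * g (RtoC r * eitheta th)%C)%C).
  set (kap := (l * h (RtoC 0) + m * g (RtoC 0))%C).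
  assert (Hray : forall th, unit_disk (RtoC r * eitheta th)%C).
  { intros th. unfold unit_disk. rewrite Cmod_mult, Cmod_R, E_mod, Rabs_pos_eq; lra. }
  assert (HF : forall th, @is_series C_AbsRing C_NormedModule (fun k => c k * eitheta (INR k * th))%C (F th)).
  { intros th.
    assert (H1 := Hh _ (Hray th)). assert (H2 := Hg _ (Hray th)).
    change (@is_series C_AbsRing C_NormedModule (fun k => Cpow (RtoC r * eitheta th)%C k * a k)%C (h (RtoC r * eitheta th)%C)) in H1.
    change (@is_series C_AbsRing C_NormedModule (fun k => Cpow (RtoC r * eitheta th)%C k * b' k)%C (g (RtoC r * eitheta th)%C)) in H2.
    apply (is_series_scal (V:=C_NormedModule) l) in H1.
    apply (is_series_scal (V:=C_NormedModule) m) in H2.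
    assert (H3 := is_series_plus (V:=C_NormedModule) _ _ _ _ H1 H2).
    eapply (is_series_ext (V:=C_NormedModule)). 2: exact H3.
    intros k. simpl. change (scal l ?x) with (l * x)%C. change (scal m ?x) with (m * x)%C.
    change (plus ?x ?y) with (x + y)%C. rewrite !pow_ray. unfold c. ring. }
  assert (Hc : ex_series (fun k => Cmod (c k))).
  { apply (@ex_series_le R_AbsRing R_CompleteNormedModule) with
      (b := fun k => INR (S k) ^ 2 * Cmod (a k) * r ^ k + INR (S k) ^ 2 * Cmod (b' k) * r ^ k).
    - intros k. change (norm ?x) with (Rabs x). rewrite Rabs_pos_eq by apply Cmod_ge_0.
      unfold c. rewrite Cmod_mult, Cmod_R, Rabs_pos_eq by (apply pow_le; lra).
      assert (T := Cmod_triangle (l * a k) (m * b' k)).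
      rewrite !Cmod_mult in T.
      assert (HS1 : 1 <= INR (S k) ^ 2) by (rewrite S_INR; generalize (pos_INR k); nra).
      assert (Hrk : 0 <= r ^ k) by (apply pow_le; lra).
      assert (Ha0 := Cmod_ge_0 (a k)). assert (Hb0 := Cmod_ge_0 (b' k)).
      assert (Hl0 := Cmod_ge_0 l). assert (Hm0 := Cmod_ge_0 m).
      assert (Cmod (l * a k + m * b' k)%C <= INR (S k) ^ 2 * Cmod (a k) + INR (S k) ^ 2 * Cmod (b' k)) by nra.
      assert (0 <= Cmod (l * a k + m * b' k)%C) by apply Cmod_ge_0.
      nra.
    - apply (ex_series_plus (V:=R_NormedModule)).
      apply (coef_summable a h Ha). lra. apply (coef_summable b' g Hb). lra. }
  assert (HB : forall th, 0 <= th <= 2 * PI -> Cmod (F th - kap)%C <= K * M).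
  { intros th Hth. unfold F, kap.
    replace (l * h (RtoC r * eitheta th)%C + m * g (RtoC r * eitheta th)%C - (l * h (RtoC 0) + m * g (RtoC 0)))%C
      with (l * (h (RtoC r * eitheta th)%C - h (RtoC 0)) + m * (g (RtoC r * eitheta th)%C - g (RtoC 0)))%C by ring.
    eapply Rle_trans. apply Cmod_triangle. rewrite !Cmod_mult.
    assert (R1 := ray_ineq K a h b' g Ha Hb HK Hqc th r Hr).
    assert (R2 := ell_le_M _ th r M Hr (Hell th Hth)).
    assert (0 <= Cmod (h (RtoC r * eitheta th)%C - h (RtoC 0))) by apply Cmod_ge_0.
    assert (0 <= Cmod (g (RtoC r * eitheta th)%C - g (RtoC 0))) by apply Cmod_ge_0.
    assert (Cmod l * Cmod (h (RtoC r * eitheta th)%C - h (RtoC 0)) <= Cmod (h (RtoC r * eitheta th)%C - h (RtoC 0))) by nra.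
    assert (Cmod m * Cmod (g (RtoC r * eitheta th)%C - g (RtoC 0)) <= Cmod (g (RtoC r * eitheta th)%C - g (RtoC 0))) by nra.
    assert (K * ell_star (fun z => Cplus (h z) (Cconj (g z))) th r <= K * M) by (apply Rmult_le_compat_l; lra).
    lra. }
  assert (Hext := extract c F kap (K * M) n Hn Hc HF HB).
  assert (Hre := Re_le (c n)).
  assert (Hcn : Re (c n) = (Cmod (a n) + Cmod (b n)) * r ^ n).
  { unfold c. destruct n as [|n']. lia. cbn [b'].
    rewrite re_scal_r, re_plus, Hla, Hmb. reflexivity. }
  lra.
Qed.

Lemma single_series (u : nat -> C) (n : nat) : (forall k, k <> n -> u k = RtoC 0) ->
  @is_series C_AbsRing C_NormedModule u (u n).
Proof.
  intros H. unfold is_series.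
  apply (filterlim_ext_loc (fun _ => u n)).
  - exists n. intros N HN. symmetry.
    change (sum_n u N = u n). apply sum_n_single; auto.
  - apply filterlim_const.
Qed.

Lemma C_series_unique (u : nat -> C) l1 l2 :
  @is_series C_AbsRing C_NormedModule u l1 -> @is_series C_AbsRing C_NormedModule u l2 -> l1 = l2.
Proof.
  intros H1 H2. apply (filterlim_locally_unique (V:=C_NormedModule) _ _ _ H1 H2).
Qed.

Section P2.
Variable M : R.
Hypothesis HM : 0 < M.
Let a : nat -> C := fun n => if Nat.eqb n 1 then RtoC M else RtoC 0.
Let b' : nat -> C := fun n => match n with O => RtoC 0 | S _ => RtoC 0 end.
Let h : C -> C := fun z => Cmult (RtoC M) z.
Let g : C -> C := fun _ => RtoC 0.

Lemma P2_ha : forall z, is_pseries a z (h z).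
Proof.
  intros z. change (@is_series C_AbsRing C_NormedModule (fun k => Cpow z k * a k)%C (h z)).
  assert (H := single_series (fun k => Cpow z k * a k)%C 1).
  replace (h z) with (Cpow z 1 * a 1%nat)%C. apply H.
  intros k Hk. unfold a. destruct (Nat.eqb_spec k 1); [lia|]. apply Cmult_0_r.
  unfold h, a. simpl. ring.
Qed.

Lemma P2_gb : forall z, is_pseries b' z (g z).
Proof.
  intros z. change (@is_series C_AbsRing C_NormedModule (fun k => Cpow z k * b' k)%C (g z)).
  apply (is_series_ext (V:=C_NormedModule)) with (fun _ => RtoC 0).
  intros k. unfold b'. destruct k; rewrite Cmult_0_r; reflexivity.
  apply is_series_zero.
Qed.

Lemma P2_D : forall z, unit_disk z -> Dser a z = RtoC M /\ Dser b' z = RtoC 0.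
Proof.
  intros z Hz. split.
  - assert (H1 := Dser_correct a h (fun z _ => P2_ha z) z Hz).
    assert (H2 := single_series (dterm a z) 1).
    rewrite (C_series_unique _ _ _ H1 (H2 ltac:(intros k Hk; unfold dterm, a; destruct (Nat.eqb_spec k 1); [lia|]; ring))).
    unfold dterm, a. simpl. apply C_eq; simpl; ring.
  - assert (H1 := Dser_correct b' g (fun z _ => P2_gb z) z Hz).
    apply (C_series_unique _ _ _ H1).
    apply (is_series_ext (V:=C_NormedModule)) with (fun _ => RtoC 0).
    intros k. unfold dterm, b'. destruct k; apply C_eq; simpl; ring.
    apply is_series_zero.
Qed.

Lemma P2_dz : forall z, unit_disk z ->
  dz (fun w => Cplus (h w) (Cconj (g w))) z = RtoC M /\
  dzb (fun w => Cplus (h w) (Cconj (g w))) z = RtoC 0.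
Proof.
  intros z Hz.
  destruct (dz_dzb a h b' g (fun z _ => P2_ha z) (fun z _ => P2_gb z) z Hz) as [H1 H2].
  destruct (P2_D z Hz) as [D1 D2].
  rewrite H1, H2, D1, D2. split; auto. apply C_eq; simpl; ring.
Qed.

End P2.

Theorem part2 : (forall M : R, 0 < M ->
    let a : nat -> C := fun n => if Nat.eqb n 1 then RtoC M else RtoC 0 in
    let b : nat -> C := fun _ => RtoC 0 in
    let h : C -> C := fun z => Cmult (RtoC M) z in
    let g : C -> C := fun _ => RtoC 0 in
    (forall z, unit_disk z -> is_pseries a z (h z)) /\
    (forall z, unit_disk z ->
       is_pseries (fun n => match n with O => RtoC 0 | S _ => b n end) z (g z)) /\
    K_quasiconformal 1 (fun z => Cplus (h z) (Cconj (g z))) /\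
    (forall theta, 0 <= theta <= 2 * PI ->
       Rbar_le (ell_star1 (fun z => Cplus (h z) (Cconj (g z))) theta) (Finite M)) /\
    Cmod (a 1%nat) + Cmod (b 1%nat) = 1 * M).
Proof.
  intros M HM a b h g. subst a b h g.
  set (f := fun z : C => Cplus (Cmult (RtoC M) z) (Cconj (RtoC 0))).
  assert (Hf1 : forall w : C, fst (f w) = M * fst w) by (intros; unfold f; simpl; ring).
  assert (Hf2 : forall w : C, snd (f w) = M * snd w) by (intros; unfold f; simpl; ring).
  assert (HMe : forall x y eps, Rabs (y - x) < eps / M -> Rabs (M * y - M * x) < eps).
  { intros x y eps H. rewrite <- Rmult_minus_distr_l, Rabs_mult, Rabs_pos_eq by lra.
    apply (Rmult_lt_compat_l M) in H; auto. replace (M * (eps / M)) with eps in H by (field; lra). auto. }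
  split; [|split; [|split; [|split]]].
  - intros z _. apply P2_ha.
  - intros z _. apply P2_gb.
  - split; [split; [|split]|split].
    + intros z _. unfold continuous. apply filterlim_locally. intros eps.
      assert (Hd : 0 < eps / M) by (apply Rdiv_lt_0_compat; [apply cond_pos|lra]).
      exists (mkposreal _ Hd). intros y [Hy1 Hy2]. cbn [pos] in Hy1, Hy2.
      assert (G : Rabs (fst (f y) - fst (f z)) < eps /\ Rabs (snd (f y) - snd (f z)) < eps).
      { rewrite !Hf1, !Hf2. split; apply HMe; auto. }
      exact G.
    + intros z w _ _ Hzw.
      assert (E1 := f_equal fst Hzw). assert (E2 := f_equal snd Hzw).
      fold (f z) (f w) in E1, E2. rewrite !Hf1 in E1. rewrite !Hf2 in E2.
      apply C_eq; [apply (Rmult_eq_reg_l M)|apply (Rmult_eq_reg_l M)]; auto; lra.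
    + intros U HU Hsub. intros w [z [Hz Hzw]].
      destruct (HU z Hz) as [eps Heps].
      assert (Hd : 0 < M * eps) by (apply Rmult_lt_0_compat; [lra|apply cond_pos]).
      exists (mkposreal _ Hd). intros y [Hy1 Hy2]. cbn [pos] in Hy1, Hy2.
      exists (fst y / M, snd y / M). split.
      * apply Heps. rewrite <- Hzw in Hy1, Hy2. fold (f z) in Hy1, Hy2. rewrite Hf1 in Hy1. rewrite Hf2 in Hy2.
        change (Rabs (fst y - M * fst z) < M * eps) in Hy1.
        change (Rabs (snd y - M * snd z) < M * eps) in Hy2.
        assert (G : Rabs (fst y / M - fst z) < eps /\ Rabs (snd y / M - snd z) < eps).
        { split.
          - replace (fst y / M - fst z) with ((fst y - M * fst z) / M) by (field; lra).
            unfold Rdiv. rewrite Rabs_mult, (Rabs_pos_eq (/ M)) by (left; apply Rinv_0_lt_compat; lra).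
            apply (Rmult_lt_reg_r M); auto. rewrite Rmult_assoc, Rinv_l, Rmult_1_r by lra. lra.
          - replace (snd y / M - snd z) with ((snd y - M * snd z) / M) by (field; lra).
            unfold Rdiv. rewrite Rabs_mult, (Rabs_pos_eq (/ M)) by (left; apply Rinv_0_lt_compat; lra).
            apply (Rmult_lt_reg_r M); auto. rewrite Rmult_assoc, Rinv_l, Rmult_1_r by lra. lra. }
        exact G.
      * apply C_eq; simpl; field; lra.
    + intros z Hz. destruct (P2_dz M z Hz) as [D1 D2]. fold f in D1, D2.
      rewrite D1, D2, Cmod_0, Cmod_R, Rabs_pos_eq by lra. nra.
    + intros z Hz. destruct (P2_dz M z Hz) as [D1 D2]. fold f in D1, D2.
      rewrite D1, D2, Cmod_0, Cmod_R, Rabs_pos_eq by lra. nra.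
  - intros theta Hth. unfold ell_star1.
    destruct (Lub_Rbar_correct (fun x => exists r, 0 < r < 1 /\ x = ell_star f theta r)) as [_ Hlub].
    apply Hlub. intros x [r [Hr ->]]. simpl.
    unfold ell_star.
    rewrite (RInt_ext _ (fun _ => M)).
    + rewrite RInt_const. change (scal (r - 0) M) with ((r - 0) * M). nra.
    + intros x Hx. rewrite Rmin_left, Rmax_right in Hx by lra.
      assert (Hu : unit_disk (RtoC x * eitheta theta)%C).
      { unfold unit_disk. rewrite Cmod_mult, Cmod_R, E_mod, Rabs_pos_eq; lra. }
      destruct (P2_dz M _ Hu) as [D1 D2]. fold f in D1, D2.
      rewrite D1, D2, Cmult_0_r, Cplus_0_r, Cmod_R, Rabs_pos_eq; lra.
  - simpl. rewrite Cmod_R, Cmod_0, Rabs_pos_eq; lra.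
Qed.

Theorem theorem4 :
  (forall (K M : R) (a b : nat -> C) (h g : C -> C),
    1 <= K -> 0 < M ->
    (forall z, unit_disk z -> is_pseries a z (h z)) ->
    (forall z, unit_disk z ->
       is_pseries (fun n => match n with O => RtoC 0 | S _ => b n end) z (g z)) ->
    K_quasiconformal K (fun z => Cplus (h z) (Cconj (g z))) ->
    (forall theta, 0 <= theta <= 2 * PI ->
       Rbar_le (ell_star1 (fun z => Cplus (h z) (Cconj (g z))) theta) (Finite M)) ->
    forall n : nat, (1 <= n)%nat -> Cmod (a n) + Cmod (b n) <= K * M)
  /\
  (forall M : R, 0 < M ->
    let a : nat -> C := fun n => if Nat.eqb n 1 then RtoC M else RtoC 0 in
    let b : nat -> C := fun _ => RtoC 0 in
    let h : C -> C := fun z => Cmult (RtoC M) z in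
    let g : C -> C := fun _ => RtoC 0 in
    (forall z, unit_disk z -> is_pseries a z (h z)) /\
    (forall z, unit_disk z ->
       is_pseries (fun n => match n with O => RtoC 0 | S _ => b n end) z (g z)) /\
    K_quasiconformal 1 (fun z => Cplus (h z) (Cconj (g z))) /\
    (forall theta, 0 <= theta <= 2 * PI ->
       Rbar_le (ell_star1 (fun z => Cplus (h z) (Cconj (g z))) theta) (Finite M)) /\
    Cmod (a 1%nat) + Cmod (b 1%nat) = 1 * M).
Proof.
  split.
  - exact part1.
  - exact part2.
Qed.
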